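(* Let $(G,\rho)$ be a ribbon graph with a vertex $v$. Let $e_1\neq e_2$ be two edges incident to $v$ lying in the same $v$-component, and let $w_1,w_2$ be their other endpoints respectively. Then there exists a spanning tree $T$ of $G$ such that (i) $e_1\in T$, (ii) $e_2\notin T$, and (iii) the path in $T$ from $w_2$ to $v$ passes through $w_1$.
   Context: Graphs are finite, connected, loopless, possibly with multiple edges. A ribbon graph assigns to each vertex a cyclic order on its incident edges. For a vertex $v$, a $v$-component of $(G,\rho)$ is the full ribbon subgraph induced on the vertex set of a connected component of $G\setminus v$ together with $v$. *)

(* Defs.v *)
From mathcomp Require Import all_boot all_fingroup.
Set Implicit Arguments. Unset Strict Implicit. Unset Printing Implicit Defensive.

Section Graphs.
Variables (V E : finType) (src tgt : E -> V).

Definition loopless := forall e, src e != tgt e.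

Definition incident (e : E) (x : V) : bool := (src e == x) || (tgt e == x).

(* the endpoint of e other than x (meaningful when e is incident to x) *)
Definition other_end (e : E) (x : V) : V := if src e == x then tgt e else src e.

Definition adj_in (F : {set E}) : rel V :=
  fun x y => [exists e in F, ((src e == x) && (tgt e == y)) ||
                             ((src e == y) && (tgt e == x))].

Definition sconnected (F : {set E}) : Prop := forall x y : V, connect (adj_in F) x y.

Definition gconnected : Prop := sconnected [set: E].

Definition spanning_tree (T : {set E}) : Prop :=
  sconnected T /\ forall e, e \in T -> ~ sconnected (T :\ e).

Definition adj_minus (v : V) : rel V :=
  fun x y => [&& x != v, y != v & adj_in [set: E] x y].

(* e1 and e2 (incident to v) lie in the same v-component: their other
   endpoints lie in the same connected component of G \ v *)
Definition same_v_component (v : V) (e1 e2 : E) : bool :=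
  [&& incident e1 v, incident e2 v &
      connect (adj_minus v) (other_end e1 v) (other_end e2 v)].

(* a path (no repeated vertex) in the subgraph T from x to y, given by its
   vertex sequence x :: p *)
Definition tpath (T : {set E}) (x y : V) (p : seq V) : bool :=
  [&& path (adj_in T) x p, last x p == y & uniq (x :: p)].

(* ribbon structure: for every vertex x a cyclic order on the edges
   incident to x, encoded as a permutation of E that fixes the
   non-incident edges and acts as a single cycle on the incident ones *)
Definition ribbon_structure (rho : V -> {perm E}) : Prop :=
  forall x : V,
    (forall e, ~~ incident e x -> rho x e = e) /\
    (forall e f, incident e x -> incident f x -> fconnect (rho x) e f).

End Graphs.

(* Main.v *)
Require Import Defs.
From mathcomp Require Import all_boot all_fingroup.
Set Implicit Arguments. Unset Strict Implicit. Unset Printing Implicit Defensive.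

Definition forestb (V E : finType) (src tgt : E -> V) (F : {set E}) : bool :=
  [forall e in F, ~~ connect (adj_in src tgt (F :\ e)) (src e) (tgt e)].

Lemma adjP (V E : finType) (src tgt : E -> V) (F : {set E}) x y :
  reflect (exists2 e, e \in F &
             ((src e == x) && (tgt e == y)) || ((src e == y) && (tgt e == x)))
          (adj_in src tgt F x y).
Proof.
apply: (iffP existsP) => [[e /andP [He H]]|[e He H]]; exists e => //.
exact/andP.
Qed.

Lemma adj_sym (V E : finType) (src tgt : E -> V) (F : {set E}) : symmetric (adj_in src tgt F).
Proof. move=> x y; apply/adjP/adjP => -[e He H]; exists e => //; by rewrite orbC. Qed.

Lemma connect_symA (V E : finType) (src tgt : E -> V) (F : {set E}) :
  connect_sym (adj_in src tgt F).
Proof. exact: sym_connect_sym (adj_sym _ _ _). Qed.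

Lemma connect_repl (V E : finType) (src tgt : E -> V) (F G : {set E}) :
  (forall e, e \in F -> connect (adj_in src tgt G) (src e) (tgt e)) ->
  forall x y, connect (adj_in src tgt F) x y -> connect (adj_in src tgt G) x y.
Proof.
move=> HF x y; apply: connect_sub => {}x {}y /adjP [e He /orP [] /andP [/eqP <- /eqP <-]].
  exact: HF.
rewrite connect_symA; exact: HF.
Qed.

Lemma connect_mono (V E : finType) (src tgt : E -> V) (F G : {set E}) x y :
  F \subset G -> connect (adj_in src tgt F) x y -> connect (adj_in src tgt G) x y.
Proof.
move=> sFG; apply: connect_repl => e He; apply: connect1; apply/adjP.
by exists e; [exact: (subsetP sFG) | rewrite !eqxx].
Qed.

Lemma connect_addP (V E : finType) (src tgt : E -> V) (F : {set E}) f a b :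
  connect (adj_in src tgt (f |: F)) a b ->
  [\/ connect (adj_in src tgt F) a b,
      connect (adj_in src tgt F) a (src f) && connect (adj_in src tgt F) (tgt f) b |
      connect (adj_in src tgt F) a (tgt f) && connect (adj_in src tgt F) (src f) b].
Proof.
have Ct := @connect_trans _ (adj_in src tgt F).
have Cs := @connect_symA _ _ src tgt F.
move=> /connectP [p Hp ->].
elim: p a Hp => [|x p IH] a /=; first by constructor 1; exact: connect0.
case/andP => /adjP [e]; rewrite !inE => /orP [/eqP -> | He] Hax /IH.
  case/orP: Hax => /andP [/eqP Ea /eqP Ex]; subst a x.
  - case=> [H | /andP [H1 H2] | /andP [H1 H2]].
    + by constructor 2; rewrite connect0 H.
    + by constructor 1; rewrite Cs in H1; exact: Ct H1 H2.
    + by constructor 1.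
  - case=> [H | /andP [H1 H2] | /andP [H1 H2]].
    + by constructor 3; rewrite connect0 H.
    + by constructor 1.
    + by constructor 1; rewrite Cs in H1; exact: Ct H1 H2.
have Cax : connect (adj_in src tgt F) a x.
  by apply: connect1; apply/adjP; exists e.
case=> [H | /andP [H1 H2] | /andP [H1 H2]].
- by constructor 1; exact: Ct Cax H.
- by constructor 2; rewrite (Ct _ _ _ Cax H1).
- by constructor 3; rewrite (Ct _ _ _ Cax H1).
Qed.

Lemma add_forest (V E : finType) (src tgt : E -> V) (F : {set E}) f :
  forestb src tgt F -> ~~ connect (adj_in src tgt F) (src f) (tgt f) ->
  forestb src tgt (f |: F).
Proof.
move=> /forall_inP fF Hnc; apply/forall_inP => e.
rewrite !inE; case: (eqVneq e f) => [-> _ | Hef /= HeF].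
  apply: contra Hnc; apply: connect_mono; apply/subsetP => x; rewrite !inE.
  by case/andP => Hx /orP[/eqP Ex | //]; rewrite Ex eqxx in Hx.
apply/negP => Hc.
have : connect (adj_in src tgt (f |: (F :\ e))) (src e) (tgt e).
  apply: connect_mono Hc; apply/subsetP => x; rewrite !inE.
  by case: (x == f); rewrite /= ?andbT ?orbT.
have sub : F :\ e \subset F by exact: subsetDl.
have Ct := @connect_trans _ (adj_in src tgt F).
have Cs := @connect_symA _ _ src tgt F.
have Ce : connect (adj_in src tgt F) (src e) (tgt e).
  by apply: connect1; apply/adjP; exists e; rewrite ?eqxx.
case/connect_addP => [C | /andP [C1 C2] | /andP [C1 C2]].
- by have := fF e HeF; rewrite C.
- move/negP: Hnc; apply.
  have {}C1 := connect_mono sub C1; have {}C2 := connect_mono sub C2.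
  rewrite Cs in C1; rewrite Cs in C2.
  exact: Ct (Ct _ _ _ C1 Ce) C2.
- move/negP: Hnc; apply.
  have {}C1 := connect_mono sub C1; have {}C2 := connect_mono sub C2.
  have Ce' : connect (adj_in src tgt F) (tgt e) (src e) by rewrite Cs.
  exact: Ct _ _ _ (Ct _ _ _ C2 Ce') C1.
Qed.

Lemma maxforest (V E : finType) (src tgt : E -> V) (F0 H : {set E}) :
  forestb src tgt F0 -> F0 \subset H ->
  exists T, [/\ forestb src tgt T, F0 \subset T, T \subset H &
     forall f, f \in H -> connect (adj_in src tgt T) (src f) (tgt f)].
Proof.
move=> fF0 sF0H.
pose P (F : {set E}) := [&& forestb src tgt F, F0 \subset F & F \subset H].
have PF0 : P F0 by rewrite /P fF0 subxx sF0H.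
case: (arg_maxnP (fun F : {set E} => #|F|) PF0) => T /and3P [fT sF0T sTH] maxT.
exists T; split => // f Hf.
apply/contraT => Hnc.
have fnT : f \notin T.
  apply: contra Hnc => HfT; apply: connect1; apply/adjP; exists f => //.
  by rewrite ?eqxx.
have PfT : P (f |: T).
  rewrite /P add_forest //=; apply/andP; split.
    by apply: subset_trans sF0T _; apply/subsetP => x Hx; rewrite !inE Hx orbT.
  by apply/subsetP => x; rewrite !inE => /orP [/eqP -> // | Hx]; exact: (subsetP sTH).
have := maxT _ PfT; rewrite cardsU1 fnT add1n /= ltnn; done.
Qed.

Lemma iso_vertex (V E : finType) (src tgt : E -> V) (F : {set E}) v y :
  (forall e, e \in F -> ~~ incident src tgt e v) ->
  connect (adj_in src tgt F) v y -> y = v.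
Proof.
move=> Hn /connectP [[|x p] /= Hp ->] //.
case/andP: Hp => /adjP [e He H] _; have := Hn e He; rewrite /incident.
by case/orP: H => /andP [/eqP -> /eqP ->]; rewrite eqxx ?orbT.
Qed.

Lemma adj_other (V E : finType) (src tgt : E -> V) (F : {set E}) e x :
  e \in F -> incident src tgt e x -> adj_in src tgt F x (other_end src tgt e x).
Proof.
move=> He; rewrite /incident /other_end; case Hs: (src e == x) => /= Hx;
  apply/adjP; exists e => //.
  by rewrite Hs eqxx.
by rewrite Hx eqxx orbT.
Qed.

Lemma connect_other (V E : finType) (src tgt : E -> V) (G : {set E}) e x :
  incident src tgt e x ->
  connect (adj_in src tgt G) x (other_end src tgt e x) ->
  connect (adj_in src tgt G) (src e) (tgt e).
Proof.
rewrite /incident /other_end; case Hs: (src e == x) => /= Hx.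
  by rewrite (eqP Hs).
by rewrite (eqP Hx) => H; rewrite connect_symA.
Qed.

Lemma path_avoid (V E : finType) (src tgt : E -> V) (F : {set E}) e1 w x p :
  path (adj_in src tgt F) x p -> w \notin x :: p -> incident src tgt e1 w ->
  path (adj_in src tgt (F :\ e1)) x p.
Proof.
move=> + + Hinc; elim: p x => //= y p IH x /andP [Hxy Hp].
rewrite inE negb_or => /andP [Hwx Hr].
rewrite IH // andbT.
case/adjP: Hxy => e He H; apply/adjP; exists e => //.
rewrite !inE He andbT; apply/eqP => Ee; subst e.
move: Hr; rewrite inE negb_or => /andP [Hwy _].
move: Hinc; rewrite /incident.
by case/orP: H => /andP [/eqP -> /eqP ->]; rewrite ![_ == w]eq_sym (negbTE Hwx) (negbTE Hwy).
Qed.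

Theorem lemma4p2 (V E : finType) (src tgt : E -> V) (rho : V -> {perm E})
    (Hloop : loopless src tgt) (Hconn : gconnected src tgt)
    (Hrib : ribbon_structure src tgt rho)
    (v : V) (e1 e2 : E) (Hne : e1 != e2)
    (Hcomp : same_v_component src tgt v e1 e2) :
  let w1 := other_end src tgt e1 v in
  let w2 := other_end src tgt e2 v in
  exists T : {set E},
    [/\ spanning_tree src tgt T, e1 \in T, e2 \notin T &
        forall p : seq V, tpath src tgt T w2 v p -> w1 \in w2 :: p].
Proof.
move=> w1 w2.
case/and3P: Hcomp => Hi1 Hi2 Hc.
pose H1 := [set e | ~~ incident src tgt e v].
have f0 : forestb src tgt set0 by apply/forall_inP => e; rewrite inE.
have [T1 [fT1 _ sT1H1 cT1]] := maxforest f0 (sub0set H1).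
have C1 : connect (adj_in src tgt T1) w2 w1.
  apply: (connect_repl cT1); rewrite connect_symA.
  apply: connect_sub Hc => x y /and3P [Hx Hy /adjP [e _ H]].
  apply: connect1; apply/adjP; exists e => //; rewrite inE /incident.
  by case/orP: H => /andP [/eqP -> /eqP ->]; rewrite negb_or ?Hx ?Hy.
have nT1 : forall e, e \in T1 -> ~~ incident src tgt e v.
  by move=> e He; have := subsetP sT1H1 e He; rewrite inE.
have fF1 : forestb src tgt (e1 |: T1).
  apply: add_forest => //; apply/negP => Hcon.
  move: (Hloop e1); move: Hi1; rewrite /incident; case/orP => /eqP Hv.
    by rewrite Hv in Hcon; rewrite (iso_vertex nT1 Hcon) Hv eqxx.
  rewrite Hv connect_symA in Hcon.
  by rewrite (iso_vertex nT1 Hcon) Hv eqxx.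
have sF1H : e1 |: T1 \subset [set~ e2].
  apply/subsetP => e; rewrite !inE => /orP [/eqP -> // | HeT1].
  apply/eqP => Ee; subst e; by move: (nT1 _ HeT1); rewrite Hi2.
have [T [fT sF1T sTH cT]] := maxforest fF1 sF1H.
have e1T : e1 \in T by apply: (subsetP sF1T); rewrite setU11.
have sT1T : T1 \subset T.
  by apply/subsetP => e He; apply: (subsetP sF1T); rewrite inE He orbT.
have C1T := connect_mono sT1T C1.
have conT : sconnected src tgt T.
  move=> x y; apply: connect_repl (Hconn x y) => e _.
  case: (eqVneq e e2) => [-> | Hne2]; last by apply: cT; rewrite !inE.
  apply: (connect_other Hi2).
  apply: (connect_trans (y := w1)); first exact: connect1 (adj_other e1T Hi1).
  by rewrite connect_symA.
have Hinc1 : incident src tgt e1 w1.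
  by rewrite /w1 /incident /other_end; case: ifP => _; rewrite eqxx ?orbT.
exists T; split => //.
- split => // e He Hs; move/forall_inP: fT => /(_ e He) /negP; apply; exact: Hs.
- by apply/negP => H; have := subsetP sTH e2 H; rewrite !inE eqxx.
move=> p /and3P [Hp /eqP Hl Hu]; apply/contraT => Hw1.
have Hp' := path_avoid Hp Hw1 Hinc1.
have C2 : connect (adj_in src tgt (T :\ e1)) w2 v by apply/connectP; exists p.
have sT1 : T1 \subset T :\ e1.
  apply/subsetP => e He; rewrite !inE (subsetP sT1T e He) andbT.
  by apply/eqP => Ee; subst e; move: (nT1 _ He); rewrite Hi1.
have C3 := connect_mono sT1 C1.
have C4 : connect (adj_in src tgt (T :\ e1)) v w1.
  by apply: connect_trans C3; rewrite connect_symA.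
move/forall_inP: fT => /(_ e1 e1T); by rewrite (connect_other Hi1 C4).
Qed.
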